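(* Let $G=(V,E)$ be a strongly connected digraph, $s\in V$, and let $v,w$ be two distinct vertices of $G$. Then $v \leftrightarrow_{\mathrm{2e}} w$ in $G$ if and only if there is a subtree root $r$ such that $v$ and $w$ are both ordinary vertices of the auxiliary graph $G_r$ (i.e., $v,w\in T(r)$) and $v \leftrightarrow_{\mathrm{2e}} w$ in $G_r$.
   Context: For vertices $v,w$ of a digraph $H$, $v \leftrightarrow_{\mathrm{2e}} w$ in $H$ means $v=w$, or there are two edge-disjoint directed paths from $v$ to $w$ and two edge-disjoint directed paths from $w$ to $v$ in $H$. For a digraph $G=(V,E)$ and $s\in V$ with every vertex reachable from $s$: $u$ dominates $w$ in the flow graph $G(s)$ if every path from $s$ to $w$ contains $u$; the dominator tree $D(s)$ is the rooted tree on $V$ with root $s$ in which $u$ is an ancestor of $w$ iff $u$ dominates $w$; $d(w)$ is the parent of $w\neq s$. An edge $(u,w)$ is a bridge of $G(s)$ if every path from $s$ to $w$ contains it (then $u=d(w)$). A vertex $w\neq s$ is marked if $(d(w),w)$ is a bridge. Deleting from $D(s)$ all edges $(d(w),w)$ with $w$ marked decomposes $D(s)$ into subtrees rooted at $s$ or at marked vertices; $T(v)$ is the subtree containing $v$. A vertex $x\in T(r)$ is a boundary vertex of $T(r)$ if $x$ has a marked child in $D(s)$. Auxiliary graph: for a subtree root $r$ that is not a leaf of $D(s)$, $G_r=(V_r,E_r)$ has ordinary vertices $V_r^o$ = the vertices of $T(r)$ and auxiliary vertices $V_r^a$ consisting of: a copy of each marked child $z$ of each boundary vertex $x$ of $T(r)$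 (with the edge $(x,z)$ in $E_r$), and, if $r\neq s$, a copy of $d(r)$ (with the edge $(d(r),r)$ in $E_r$). $E_r$ further contains all edges of $E$ with both endpoints in $T(r)$, plus the following shortcut edges, for each $(u,v)\in E$: (a) if $u\in T(r)$ and $v$ is not a descendant of $r$ in $D(s)$, the edge $(u,d(r))$; (b) if $v\in T(r)$ and $u$ is a descendant in $D(s)$ of a marked child $z$ of a boundary vertex of $T(r)$, the edge $(z,v)$; (c) if $u$ is a descendant in $D(s)$ of a marked child $z$ of a boundary vertex of $T(r)$ and $v$ is not a descendant of $r$ in $D(s)$, the edge $(z,d(r))$. Parallel duplicate edges are not kept. *)

(* Defs.v *)
From mathcomp Require Import all_boot.
Set Implicit Arguments. Unset Strict Implicit. Unset Printing Implicit Defensive.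

Section Digraphs.
Variable V : finType.

Fixpoint walk (R : V -> V -> Prop) (x : V) (p : seq V) : Prop :=
  match p with
  | [::] => True
  | y :: q => R x y /\ walk R y q
  end.

Definition walk_edges (x : V) (p : seq V) : seq (V * V) := zip (x :: p) p.

Definition two_edge_disjoint_paths (R : V -> V -> Prop) (x y : V) : Prop :=
  exists p q : seq V,
    [/\ walk R x p, last x p = y, walk R x q, last x q = y &
        all (fun e => e \notin walk_edges x q) (walk_edges x p)].

Definition two_edge_conn (R : V -> V -> Prop) (v w : V) : Prop :=
  v = w \/ (two_edge_disjoint_paths R v w /\ two_edge_disjoint_paths R w v).

Definition edgeP (E : rel V) : V -> V -> Prop := fun a b => E a b.

Definition strongly_connected (E : rel V) : Prop :=
  forall x y : V, exists p, walk (edgeP E) x p /\ last x p = y.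

Definition dom (E : rel V) (s u w : V) : Prop :=
  forall p, walk (edgeP E) s p -> last s p = w -> u \in s :: p.

Definition idom (E : rel V) (s u w : V) : Prop :=
  [/\ w <> s, u <> w, dom E s u w &
      forall x, x <> w -> dom E s x w -> dom E s x u].

Definition bridge (E : rel V) (s u w : V) : Prop :=
  E u w /\ forall p, walk (edgeP E) s p -> last s p = w ->
                     (u, w) \in walk_edges s p.

Definition marked (E : rel V) (s w : V) : Prop :=
  w <> s /\ exists u, idom E s u w /\ bridge E s u w.

Definition subtree_root (E : rel V) (s r : V) : Prop := r = s \/ marked E s r.

(* x belongs to T(r): x lies below r in D(s) and the tree path from r to x
   contains no deleted (marked) edge *)
Definition inT (E : rel V) (s r x : V) : Prop :=
  [/\ subtree_root E s r, dom E s r x &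
      forall y, y <> r -> dom E s r y -> dom E s y x -> ~ marked E s y].

(* z is a marked child of a boundary vertex of T(r) (an auxiliary vertex) *)
Definition aux_child (E : rel V) (s r z : V) : Prop :=
  marked E s z /\ exists x, inT E s r x /\ idom E s x z.

(* edge relation E_r of the auxiliary graph G_r.  Auxiliary vertices are
   represented by the original vertices they copy (these never lie in T(r)). *)
Definition aux_edge (E : rel V) (s r : V) (a b : V) : Prop :=
  (inT E s r a /\ marked E s b /\ idom E s a b) \/
  (r <> s /\ b = r /\ idom E s a r) \/
  (inT E s r a /\ inT E s r b /\ E a b) \/
  (exists v, [/\ E a v, inT E s r a, ~ dom E s r v & idom E s b r]) \/
  (exists u, [/\ E u b, inT E s r b, aux_child E s r a & dom E s a u]) \/
  (exists u v, [/\ E u v, aux_child E s r a, dom E s a u,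
                       ~ dom E s r v & idom E s b r]).

End Digraphs.

(* Main.v *)
Require Import Defs.
From mathcomp Require Import all_boot zify.
From Stdlib Require Import ClassicalEpsilon Classical.
Set Implicit Arguments. Unset Strict Implicit. Unset Printing Implicit Defensive.


Section Walks.
Variable V : finType.
Implicit Types (R : V -> V -> Prop) (x y : V) (p q : seq V).

Lemma walk_cat R x p q : walk R x (p ++ q) <-> walk R x p /\ walk R (last x p) q.
Proof.
elim: p x => [|y p IH] x /=; first by tauto.
rewrite IH; tauto.
Qed.

Lemma walk_edges_cons x y p : walk_edges x (y :: p) = (x, y) :: walk_edges y p.
Proof. by []. Qed.

Lemma walk_edges_cat x p q :
  walk_edges x (p ++ q) = walk_edges x p ++ walk_edges (last x p) q.
Proof.
elim: p x => [|y p IH] x //=.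
by rewrite !walk_edges_cons IH.
Qed.

Lemma walk_edges_mem x p a b : (a, b) \in walk_edges x p -> a \in x :: p /\ b \in p.
Proof.
elim: p x => [|y p IH] x //=.
rewrite walk_edges_cons in_cons => /orP [/eqP [-> ->]|/IH [H1 H2]].
  by rewrite !in_cons !eqxx /=.
by split; rewrite in_cons ?H1 ?H2 orbT.
Qed.

Lemma walk_edge_rel R x p a b : walk R x p -> (a, b) \in walk_edges x p -> R a b.
Proof.
elim: p x => [|y p IH] x //= [Hxy Hw].
rewrite walk_edges_cons in_cons => /orP [/eqP [-> ->]|/IH]; first by [].
by apply.
Qed.

Lemma split_last y x p : y \in x :: p ->
  exists p1 p2, [/\ p = p1 ++ p2, last x p1 = y & y \notin p2].
Proof.
elim/last_ind: p => [|p z IH].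
  by rewrite mem_seq1 => /eqP ->; exists [::], [::].
case: (boolP (y == z)) => [/eqP ->|Hyz] Hy.
  by exists (rcons p z), [::]; rewrite cats0 last_rcons.
have : y \in x :: p.
  by move: Hy; rewrite -rcons_cons mem_rcons in_cons (negPf Hyz).
move=> /IH [p1 [p2 [-> H1 H2]]].
exists p1, (rcons p2 z); split => //; first by rewrite rcons_cat.
by rewrite mem_rcons in_cons (negPf Hyz).
Qed.

Lemma first_enter (Q : pred V) x p : ~~ Q x -> has Q p ->
  exists p1 b p2, [/\ p = p1 ++ b :: p2, all (predC Q) (x :: p1) & Q b].
Proof.
elim: p x => [|y p IH] x //= Hx.
case: (boolP (Q y)) => Hy /=.
  by move=> _; exists [::], y, p; rewrite /= Hx.
move=> /(IH y Hy) [p1 [b [p2 [-> H1 H2]]]].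
exists (y :: p1), b, p2; split => //.
by rewrite /= Hx.
Qed.

Lemma enter_edge (Q : pred V) x p : ~~ Q x -> has Q p ->
  exists a b, [/\ (a, b) \in walk_edges x p, ~~ Q a & Q b].
Proof.
move=> Hx Hp; have [p1 [b [p2 [-> H1 H2]]]] := first_enter Hx Hp.
exists (last x p1), b; split => //.
  by rewrite walk_edges_cat walk_edges_cons mem_cat in_cons eqxx orbT.
have : last x p1 \in x :: p1 by rewrite mem_last.
by move: H1 => /allP H /H.
Qed.

Lemma exit_edge (Q : pred V) x p : has Q (x :: p) -> ~~ Q (last x p) ->
  exists a b, [/\ (a, b) \in walk_edges x p, Q a & ~~ Q b].
Proof.
move=> /hasP [t Ht Qt] Hl.
have [p1 [p2 [Hp Hl1 _]]] := split_last Ht.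
have Hl2 : last t p2 = last x p by rewrite Hp last_cat Hl1.
have Hh : has (predC Q) p2.
  case: p2 Hp Hl2 => [|z p2] Hp Hl2; first by move: Hl; rewrite -Hl2 /= Qt.
  apply/hasP; exists (last z p2); first by rewrite mem_last.
  by move: Hl; rewrite -Hl2.
have Hnt : ~~ predC Q t by rewrite /= Qt.
have [a [b [Hab Ha Hb]]] := enter_edge Hnt Hh.
exists a, b; split => //; last by move: Ha => /negPn.
by rewrite Hp walk_edges_cat mem_cat Hl1 Hab orbT.
Qed.

End Walks.


Section Dom.
Variable V : finType.
Variable E : rel V.
Variable s : V.
Hypothesis Hsc : strongly_connected E.
Local Notation R := (edgeP E).
Local Notation dom := (dom E s).
Implicit Types (x y a b u z : V) (p q : seq V).

Lemma dom_refl x : dom x x.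
Proof. by move=> p _ <-; rewrite mem_last. Qed.

Lemma dom_s x : dom s x.
Proof. by move=> p _ _; rewrite mem_head. Qed.

Lemma dom_trans a b c : dom a b -> dom b c -> dom a c.
Proof.
move=> Hab Hbc p Hp Hl.
have [p1 [p2 [Hpe Hl1 _]]] := split_last (Hbc p Hp Hl).
move: Hp; rewrite Hpe walk_cat => [[Hp1 _]].
move: (Hab p1 Hp1 Hl1); rewrite !in_cons mem_cat => /orP [->//|->].
by rewrite !orbT.
Qed.

Lemma ndom a b : ~ dom a b -> exists p, [/\ walk R s p, last s p = b & a \notin s :: p].
Proof.
move=> H; apply: NNPP => H2; apply: H => p Hp Hl.
apply: NNPP => Ha; apply: H2; exists p; split => //; exact/negP.
Qed.

Lemma dom_s_eq a : dom a s -> a = s.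
Proof.
by move=> /(_ [::] I erefl); rewrite mem_seq1 => /eqP.
Qed.

Lemma dom_antisym a b : dom a b -> dom b a -> a = b.
Proof.
move=> Hab Hba; apply: NNPP => Hne.
have step : forall p, walk R s p -> (last s p = a \/ last s p = b) ->
   exists p1, [/\ walk R s p1, (last s p1 = a \/ last s p1 = b) & size p1 < size p].
  move=> p Hp Hl.
  have [c [Hc1 Hc2 Hc3]] : exists c, [/\ c <> last s p, c \in s :: p & (c = a \/ c = b)].
    case: Hl => Hl.
      by exists b; split; [rewrite Hl => /esym | apply: Hba | right].
    by exists a; split; [rewrite Hl | apply: Hab | left].
  have [p1 [p2 [Hpe Hl1 _]]] := split_last Hc2.
  have Hp1 : walk R s p1 by move: Hp; rewrite Hpe walk_cat => [[]].
  exists p1; split => //.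
    by rewrite Hl1.
  case: p2 Hpe => [|y p2] Hpe.
    by case: Hc1; rewrite Hpe cats0 Hl1.
  by rewrite Hpe size_cat /= addnS ltnS leq_addr.
have [p0 [Hp0 Hl0]] := Hsc s a.
have main : forall n p, size p < n -> walk R s p -> (last s p = a \/ last s p = b) -> False.
  elim => [|n IH] p //= Hs Hp Hl.
  have [p1 [Hp1 Hl1 Hs1]] := step p Hp Hl.
  apply: (IH p1) => //; exact: leq_trans Hs1 Hs.
exact: (main (size p0).+1 p0 (ltnSn _) Hp0 (or_introl Hl0)).
Qed.

Lemma chain_aux x a b p pa1 pa2 pb1 pb2 : walk R s p -> last s p = x -> dom b x ->
  p = pa1 ++ pa2 -> last s pa1 = a -> p = pb1 ++ pb2 -> b \notin pb2 ->
  size pb1 <= size pa1 -> dom b a.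
Proof.
move=> Hp Hl Hbx Ha Hla Hb Hnb Hsz; apply: NNPP => /ndom [q [Hq Hlq Hbq]].
have Hpa2 : pa2 = drop (size pa1 - size pb1) pb2.
  have -> : pb2 = drop (size pb1) p by rewrite Hb drop_size_cat.
  by rewrite drop_drop subnK // Ha drop_size_cat.
have Hw : walk R s (q ++ pa2).
  apply/walk_cat; split => //; rewrite Hlq -Hla.
  by move: Hp; rewrite Ha walk_cat => [[]].
have Hlw : last s (q ++ pa2) = x by rewrite last_cat Hlq -Hla -last_cat -Ha.
move: (Hbx _ Hw Hlw); rewrite -cat_cons mem_cat (negPf Hbq) /= Hpa2.
by move=> /mem_drop; rewrite (negPf Hnb).
Qed.

Lemma dom_chain x a b : dom a x -> dom b x -> dom a b \/ dom b a.
Proof.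
move=> Hax Hbx; have [p [Hp Hl]] := Hsc s x.
have [pa1 [pa2 [Ha Hla Hna]]] := split_last (Hax p Hp Hl).
have [pb1 [pb2 [Hb Hlb Hnb]]] := split_last (Hbx p Hp Hl).
case: (leqP (size pb1) (size pa1)) => Hsz.
  by right; exact: (chain_aux Hp Hl Hbx Ha Hla Hb Hnb Hsz).
by left; apply: (chain_aux Hp Hl Hax Hb Hlb Ha Hna); exact: ltnW.
Qed.

Lemma idom_dom u z : idom E s u z -> dom u z.
Proof. by case. Qed.

Lemma idom_uniq u u' z : idom E s u z -> idom E s u' z -> u = u'.
Proof.
move=> [Hz Huz Hd Hm] [_ Hu'z Hd' Hm'].
by apply: dom_antisym; [apply: Hm' | apply: Hm].
Qed.

Lemma idom_ndom u z : idom E s u z -> ~ dom z u.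
Proof.
move=> [_ Hne Hd _] H; apply: Hne; exact: dom_antisym.
Qed.

Lemma bridge_edge u z : bridge E s u z -> E u z.
Proof. by case. Qed.

Lemma notin_edges x p a b : b \notin p -> (a, b) \notin walk_edges x p.
Proof. by move=> Hb; apply/negP => /walk_edges_mem [_ H]; rewrite H in Hb. Qed.

Lemma bridge_walk u z y p : bridge E s u z -> dom z y -> walk R s p -> last s p = y ->
  (u, z) \in walk_edges s p.
Proof.
move=> [_ Hbr] Hzy Hp Hl.
have [p1 [p2 [Hpe Hl1 _]]] := split_last (Hzy p Hp Hl).
have Hp1 : walk R s p1 by move: Hp; rewrite Hpe walk_cat => [[]].
by rewrite Hpe walk_edges_cat mem_cat (Hbr p1 Hp1 Hl1).
Qed.

Lemma enter_bridge u z a b : bridge E s u z -> dom z b -> ~ dom z a -> E a b ->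
  b = z /\ a = u.
Proof.
move=> Hbr Hzb /ndom [q [Hq Hlq Hzq]] Eab.
have Hw : walk R s (rcons q b).
  by rewrite -cats1; apply/walk_cat; split => //=; rewrite Hlq.
have Hl : last s (rcons q b) = b by rewrite last_rcons.
have Hzin := Hzb _ Hw Hl.
have Hbz : b = z.
  move: Hzin; rewrite -rcons_cons mem_rcons in_cons (negPf Hzq) orbF.
  by move/eqP.
split => //; move: (bridge_walk Hbr Hzb Hw Hl).
rewrite -cats1 walk_edges_cat mem_cat Hlq /= in_cons orbF.
have Hz' : z \notin q by move: Hzq; rewrite in_cons negb_or => /andP [].
rewrite (negPf (notin_edges _ _ Hz')) /= => /eqP [] //.
Qed.

Lemma bridge_sep u z a b : bridge E s u z -> dom z b -> ~ dom z a ->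
  forall p, walk R a p -> last a p = b -> (u, z) \in walk_edges a p.
Proof.
move=> Hbr Hzb /ndom [q [Hq Hlq Hzq]] p Hp Hl.
have Hw : walk R s (q ++ p) by apply/walk_cat; rewrite Hlq.
have Hl' : last s (q ++ p) = b by rewrite last_cat Hlq.
move: (bridge_walk Hbr Hzb Hw Hl'); rewrite walk_edges_cat mem_cat Hlq.
have Hz' : z \notin q by move: Hzq; rewrite in_cons negb_or => /andP [].
by rewrite (negPf (notin_edges _ _ Hz')).
Qed.

Lemma bridge_sep2 u z a b : bridge E s u z -> dom z b -> ~ dom z a ->
  ~ two_edge_disjoint_paths R a b.
Proof.
move=> Hbr Hzb Hza [p [q [Hp Hlp Hq Hlq /allP Hd]]].
have H1 := bridge_sep Hbr Hzb Hza Hp Hlp.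
have H2 := bridge_sep Hbr Hzb Hza Hq Hlq.
by move: (Hd _ H1); rewrite H2.
Qed.

End Dom.


Definition pb (P : Prop) : bool := if excluded_middle_informative P then true else false.
Lemma pbP (P : Prop) : reflect P (pb P).
Proof. by rewrite /pb; case: excluded_middle_informative => H; constructor. Qed.

Section Count.
Variable V : finType.
Variable E : rel V.
Variable s : V.
Hypothesis Hsc : strongly_connected E.
Local Notation R := (edgeP E).
Local Notation dom := (dom E s).

Definition doms (y : V) : {set V} := [set t | pb (dom t y)].

Lemma doms_lt a b : dom a b -> a <> b -> #|doms a| < #|doms b|.
Proof.
move=> Hab Hne; apply: proper_card; apply/properP; split.
  apply/subsetP => t; rewrite !inE => /pbP Hta; apply/pbP; exact: dom_trans Hta Hab.
exists b.
  rewrite inE; apply/pbP; exact: (@dom_refl _ _ _ b).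
by rewrite inE; apply/pbP => Hba; apply: Hne; exact: (dom_antisym Hsc Hab Hba).
Qed.

Lemma notInT r x : subtree_root E s r -> dom r x -> ~ inT E s r x ->
  exists y, [/\ y <> r, dom r y, dom y x & marked E s y].
Proof.
move=> Hr Hrx H; apply: NNPP => H2; apply: H; split => // y Hy1 Hy2 Hy3 Hy4.
by apply: H2; exists y.
Qed.

Lemma find_root v : exists r, inT E s r v.
Proof.
have claim : forall n r, #|V| - #|doms r| <= n -> subtree_root E s r -> dom r v ->
    exists r', inT E s r' v.
  elim => [|n IH] r Hn Hr Hrv.
  - case: (classic (inT E s r v)) => H; first by exists r.
    have [y [Hy1 Hy2 Hy3 Hy4]] := notInT Hr Hrv H.
    have := doms_lt Hy2 (nesym Hy1); have := max_card (doms y); lia.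
  - case: (classic (inT E s r v)) => H; first by exists r.
    have [y [Hy1 Hy2 Hy3 Hy4]] := notInT Hr Hrv H.
    apply: (IH y) => //; last by right.
    have := doms_lt Hy2 (nesym Hy1); have := max_card (doms y); lia.
apply: (claim #|V| s) => //; [lia | by left | exact: dom_s].
Qed.

End Count.


Section Zones.
Variable V : finType.
Variable E : rel V.
Variable s : V.
Hypothesis Hsc : strongly_connected E.
Variable r : V.
Hypothesis Hr : subtree_root E s r.
Local Notation R := (edgeP E).
Local Notation dom := (dom E s).
Local Notation In := (inT E s r).
Local Notation aux := (aux_child E s r).

Lemma domr x : dom x x. Proof. exact: (@dom_refl _ _ _ x). Qed.

Definition dr := odflt r [pick u | pb (idom E s u r)].
Definition pi t := if pb (In t) then t
  else if pb (dom r t) then odflt t [pick z | pb (aux z /\ dom z t)] else dr.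

Lemma In_r : In r.
Proof.
split; [exact: Hr | exact (@domr r) | move=> y Hy1 Hy2 Hy3]; exfalso; apply: Hy1; exact: (dom_antisym Hsc Hy3 Hy2).
Qed.

Lemma In_dom x : In x -> dom r x.
Proof. by case. Qed.

Lemma aux_facts z : aux z -> [/\ z <> r, dom r z, ~ In z & marked E s z].
Proof.
move=> [Hm [x [Hx Hxz]]].
have Hrz : dom r z := dom_trans (In_dom Hx) (idom_dom Hxz).
have Hzr : z <> r.
  by move=> Hzr; subst z; apply: (idom_ndom Hsc Hxz (In_dom Hx)).
split => // [[_ _ H]]; exact (H z Hzr Hrz (@domr z) Hm).
Qed.

Lemma reg_notIn z t : aux z -> dom z t -> ~ In t.
Proof.
move=> Hz Hzt [_ _ H]; case: (aux_facts Hz) => Hzr Hrz _ Hm.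
exact: (H z Hzr Hrz Hzt Hm).
Qed.

Lemma aux_le z z' : aux z -> aux z' -> dom z z' -> z = z'.
Proof.
move=> Hz Hz' Hzz'; apply: NNPP => Hne.
case: (Hz') => _ [x' [Hx' Hxz']].
case: (Hxz') => _ _ _ Hm.
have Hzx' : dom z x' := Hm z Hne Hzz'.
case: Hx' => _ _ H; case: (aux_facts Hz) => Hzr Hrz _ Hmz.
exact: (H z Hzr Hrz Hzx' Hmz).
Qed.

Lemma aux_uniq z z' t : aux z -> aux z' -> dom z t -> dom z' t -> z = z'.
Proof.
move=> Hz Hz' Hzt Hz't; case: (dom_chain Hsc Hzt Hz't) => H.
  exact: (aux_le Hz Hz' H).
by apply: esym; exact: (aux_le Hz' Hz H).
Qed.

Lemma exhaust t : dom r t -> ~ In t -> exists z, aux z /\ dom z t.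
Proof.
move=> Hrt HIn.
have claim : forall n y, #|doms E s y| < n ->
    [/\ y <> r, dom r y, dom y t & marked E s y] -> exists z, aux z /\ dom z t.
  elim => [|n IH] y //= Hn [Hyr Hry Hyt Hmy].
  case: (Hmy) => Hys [u [Huy Hbr]].
  case: (classic (In u)) => HIu.
    by exists y; split => //; split => //; exists u.
  have Hru : dom r u by case: (Huy) => _ _ _ Hm; apply: Hm => //; exact: nesym.
  have [y' [Hy'1 Hy'2 Hy'3 Hy'4]] := notInT Hr Hru HIu.
  have Hy'y : dom y' y := dom_trans Hy'3 (idom_dom Huy).
  have Hne : y' <> y.
    move=> Heq; subst y'; case: (Huy) => _ Hne _ _; apply: Hne.
    exact: (dom_antisym Hsc (idom_dom Huy) Hy'3).
  apply: (IH y'); last by split => //; exact: (dom_trans Hy'y Hyt).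
  have := doms_lt Hsc Hy'y Hne; lia.
have [y0 [H1 H2 H3 H4]] := notInT Hr Hrt HIn.
by apply: (claim (#|doms E s y0|).+1 y0).
Qed.

Lemma out_ne t : ~ dom r t -> r <> s.
Proof. by move=> H Hrs; apply: H; rewrite Hrs; exact: dom_s. Qed.

Lemma r_out : r <> s -> [/\ idom E s dr r, bridge E s dr r & ~ dom r dr].
Proof.
move=> Hrs; have [_ [u [Hu Hb]]] : marked E s r by case: Hr.
rewrite /dr; case: pickP => [u' /pbP Hu' | H] /=.
  have Heq := idom_uniq Hsc Hu Hu'; subst u'.
  by split => //; exact: (idom_ndom Hsc Hu).
by move: (H u) => /pbP.
Qed.

Lemma pi_In t : In t -> pi t = t.
Proof. by rewrite /pi; case: pbP. Qed.

Lemma pi_reg z t : aux z -> dom z t -> pi t = z.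
Proof.
move=> Hz Hzt; rewrite /pi; case: pbP => [HIn|_].
  by case: (reg_notIn Hz Hzt HIn).
case: pbP => [Hrt|Hn]; last first.
  by case: Hn; case: (aux_facts Hz) => _ Hrz _ _; exact: (dom_trans Hrz Hzt).
case: pickP => [z' /pbP [Hz' Hz't] | H] /=.
  exact: (aux_uniq Hz' Hz Hz't Hzt).
by move: (H z) => /pbP [].
Qed.

Lemma pi_out t : ~ dom r t -> pi t = dr.
Proof.
move=> Ht; rewrite /pi; case: pbP => [HIn|_]; first by case: Ht; exact: In_dom.
by case: pbP.
Qed.

Lemma zone t : [\/ In t, exists z, aux z /\ dom z t | ~ dom r t].
Proof.
case: (classic (In t)) => H1; first by constructor 1.
case: (classic (dom r t)) => H2; last by constructor 3.
by constructor 2; exact: exhaust.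
Qed.

Lemma pi_In_inv k t : In k -> pi t = k -> t = k.
Proof.
move=> Hk; case: (zone t) => [Ht|[z [Hz Hzt]]|Ht].
- by rewrite (pi_In Ht).
- rewrite (pi_reg Hz Hzt) => Hzk; subst k; by case: (aux_facts Hz).
- rewrite (pi_out Ht) => Hk'; subst k; case: (r_out (out_ne Ht)) => _ _ H.
  by case: H; exact: In_dom.
Qed.

Lemma pi_aux_inv z t : aux z -> pi t = z -> dom z t.
Proof.
move=> Hz; case: (zone t) => [Ht|[z' [Hz' Hzt]]|Ht].
- by rewrite (pi_In Ht) => Htz; subst t; case: (aux_facts Hz).
- by rewrite (pi_reg Hz' Hzt) => ?; subst z'.
- rewrite (pi_out Ht) => Hk'; subst z; case: (r_out (out_ne Ht)) => _ _ H.
  by case: H; case: (aux_facts Hz).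
Qed.

Lemma pi_out_inv t : r <> s -> pi t = dr -> ~ dom r t.
Proof.
move=> Hrs; case: (r_out Hrs) => _ _ Hd.
case: (zone t) => [Ht|[z' [Hz' Hzt]]|Ht] //.
- by rewrite (pi_In Ht) => Htz; subst t; case: Hd; exact: In_dom.
- by rewrite (pi_reg Hz' Hzt) => ?; subst z'; case: Hd; case: (aux_facts Hz').
Qed.

Lemma aux_bridge z : aux z -> exists u, [/\ In u, idom E s u z & bridge E s u z].
Proof.
move=> Hz; case: (Hz) => [[_ [u [Hu Hb]]] [x [Hx Hxz]]].
have Heq := idom_uniq Hsc Hu Hxz; subst x.
by exists u.
Qed.

Lemma KE a b : E a b -> pi a <> pi b -> aux_edge E s r (pi a) (pi b).
Proof.
move=> Eab Hne.
case: (zone a) => [Ha|[z [Hz Hza]]|Ha].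
- rewrite (pi_In Ha) in Hne *.
  case: (zone b) => [Hb|[z [Hz Hzb]]|Hb].
  + rewrite (pi_In Hb); right; right; left; by split.
  + rewrite (pi_reg Hz Hzb).
    have [u [Hu Huz Hbr]] := aux_bridge Hz.
    have Hza : ~ dom z a by move=> H; exact: (reg_notIn Hz H Ha).
    have [Hbz Hau] := enter_bridge Hbr Hzb Hza Eab; subst b a.
    left; split => //; by case: (aux_facts Hz).
  + rewrite (pi_out Hb); right; right; right; left.
    exists b; split => //; by case: (r_out (out_ne Hb)).
- rewrite (pi_reg Hz Hza) in Hne *.
  case: (zone b) => [Hb|[z' [Hz' Hz'b]]|Hb].
  + rewrite (pi_In Hb); right; right; right; right; left.
    by exists a; split.
  + exfalso; rewrite (pi_reg Hz' Hz'b) in Hne.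
    case: (classic (dom z' a)) => Hz'a.
      by apply: Hne; exact: (aux_uniq Hz Hz' Hza Hz'a).
    have [u [Hu Huz Hbr]] := aux_bridge Hz'.
    have [Hbz Hau] := enter_bridge Hbr Hz'b Hz'a Eab; subst b a.
    exact: (reg_notIn Hz Hza Hu).
  + rewrite (pi_out Hb); right; right; right; right; right.
    exists a, b; split => //; by case: (r_out (out_ne Hb)).
- have Hrs := out_ne Ha; rewrite (pi_out Ha) in Hne *.
  case: (r_out Hrs) => Hid Hbr Hd.
  have Hrb : dom r b.
    case: (zone b) => [Hb|[z' [Hz' Hz'b]]|Hb].
    + exact: In_dom.
    + by case: (aux_facts Hz') => _ Hrz _ _; exact: (dom_trans Hrz Hz'b).
    + by case: Hne; rewrite (pi_out Hb).
  have [Hbr' Hadr] := enter_bridge Hbr Hrb Ha Eab; subst b.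
  right; left; split => //; by rewrite (pi_In In_r).
Qed.

Fixpoint proj (x : V) (p : seq V) : seq V :=
  match p with
  | [::] => [::]
  | y :: q => if pi y == pi x then proj y q else pi y :: proj y q
  end.

Lemma proj_walk x p : walk R x p ->
  walk (aux_edge E s r) (pi x) (proj x p) /\ last (pi x) (proj x p) = pi (last x p).
Proof.
elim: p x => [|y p IH] x //= [Exy Hw].
case: (IH y Hw) => H1 H2.
case: eqP => [Heq|Hne] /=.
  by move: H1 H2; rewrite Heq.
split => //; split => //.
apply: KE => //; exact: nesym.
Qed.

Lemma proj_edges x p c d : (c, d) \in walk_edges (pi x) (proj x p) ->
  exists a b, [/\ (a, b) \in walk_edges x p, pi a = c & pi b = d].
Proof.
elim: p x => [|y p IH] x //=.
case: eqP => [Heq|Hne].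
  rewrite -Heq => /IH [a [b [Hab Ha Hb]]].
  by exists a, b; split => //; rewrite walk_edges_cons in_cons Hab orbT.
rewrite walk_edges_cons in_cons => /orP [/eqP [-> ->]|/IH [a [b [Hab Ha Hb]]]].
  by exists x, y; rewrite walk_edges_cons mem_head.
by exists a, b; split => //; rewrite walk_edges_cons in_cons Hab orbT.
Qed.

Lemma visit_aux z u x p t : aux z -> bridge E s u z -> walk R x p -> In x ->
  t \in x :: p -> pi t = z -> (u, z) \in walk_edges x p.
Proof.
move=> Hz Hbr Hp Hx Ht Htz.
have Hxz : ~~ (fun t => pi t == z) x.
  rewrite /= (pi_In Hx); apply/eqP => Hxz; subst x; by case: (aux_facts Hz).
have Htp : has (fun t => pi t == z) p.
  apply/hasP; exists t; last by rewrite Htz.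
  move: Ht; rewrite in_cons => /orP [/eqP Htx|//]; subst t.
  by move: Hxz; rewrite /= Htz eqxx.
have [a [b [Hab Ha Hb]]] := enter_edge (Q := fun t => pi t == z) Hxz Htp.
have Eab : E a b := walk_edge_rel Hp Hab.
move/eqP: Hb => Hb; have Hzb := pi_aux_inv Hz Hb.
have Hza : ~ dom z a by move=> H; move: Ha; rewrite /= (pi_reg Hz H) eqxx.
have [Hb1 Ha1] := enter_bridge Hbr Hzb Hza Eab.
by move: Hab; rewrite Hb1 Ha1.
Qed.

Lemma visit_out x p t : r <> s -> walk R x p -> In (last x p) -> t \in x :: p ->
  ~ dom r t -> (dr, r) \in walk_edges x p.
Proof.
move=> Hrs Hp Hl Ht Hrt.
have H1 : has (fun t => ~~ pb (dom r t)) (x :: p).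
  by apply/hasP; exists t => //; apply/negP => /pbP.
have H2 : ~~ (fun t => ~~ pb (dom r t)) (last x p).
  by rewrite /= negbK; apply/pbP; exact: In_dom.
have [a [b [Hab Ha Hb]]] := exit_edge (Q := fun t => ~~ pb (dom r t)) H1 H2.
have Ha' : ~ dom r a by move=> H; move: Ha; rewrite /=; case: pbP.
have Hb' : dom r b by move: Hb; rewrite /= negbK => /pbP.
case: (r_out Hrs) => _ Hbr _.
have [Hb1 Ha1] := enter_bridge Hbr Hb' Ha' (walk_edge_rel Hp Hab).
by move: Hab; rewrite Hb1 Ha1.
Qed.

Lemma fwd x y : In x -> In y -> two_edge_disjoint_paths R x y ->
  two_edge_disjoint_paths (aux_edge E s r) x y.
Proof.
move=> Hx Hy [p [q [Hp Hlp Hq Hlq Hd]]].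
have [Wp Lp] := proj_walk Hp; have [Wq Lq] := proj_walk Hq.
rewrite (pi_In Hx) in Wp Lp Wq Lq.
rewrite Hlp (pi_In Hy) in Lp; rewrite Hlq (pi_In Hy) in Lq.
exists (proj x p), (proj x q); split => //.
have common : forall e, e \in walk_edges x p -> e \in walk_edges x q -> False.
  by move=> e H1 H2; move/allP: Hd => /(_ e H1); rewrite H2.
have HyP : In (last x p) by rewrite Hlp.
have HyQ : In (last x q) by rewrite Hlq.
have cv : forall t1 t2, t1 \in x :: p -> t2 \in x :: q -> pi t1 = pi t2 -> ~ In t1 -> False.
  move=> t1 t2 Ht1 Ht2 Heq HI1.
  case: (zone t1) => [//|[z [Hz Hzt]]|Hout].
  - have [u [_ _ Hbr]] := aux_bridge Hz.
    have E1 := visit_aux Hz Hbr Hp Hx Ht1 (pi_reg Hz Hzt).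
    have Ht2z : pi t2 = z by rewrite -Heq (pi_reg Hz Hzt).
    have E2 := visit_aux Hz Hbr Hq Hx Ht2 Ht2z.
    exact: (common _ E1 E2).
  - have Hrs := out_ne Hout.
    have E1 := visit_out Hrs Hp HyP Ht1 Hout.
    have Ht2d : pi t2 = dr by rewrite -Heq (pi_out Hout).
    have Ht2o : ~ dom r t2 := pi_out_inv Hrs Ht2d.
    have E2 := visit_out Hrs Hq HyQ Ht2 Ht2o.
    exact: (common _ E1 E2).
apply/allP => [[c d]] Hcd; apply/negP => Hcd2.
have Hcd' : (c, d) \in walk_edges (pi x) (proj x p) by rewrite (pi_In Hx).
have Hcd2' : (c, d) \in walk_edges (pi x) (proj x q) by rewrite (pi_In Hx).
have [a1 [b1 [Hab1 Ha1 Hb1]]] := proj_edges Hcd'.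
have [a2 [b2 [Hab2 Ha2 Hb2]]] := proj_edges Hcd2'.
have [Ha1m Hb1m] := walk_edges_mem Hab1.
have [Ha2m Hb2m] := walk_edges_mem Hab2.
case: (classic (In a1)) => HIa1; last first.
  by apply: (cv a1 a2) => //; rewrite Ha1 Ha2.
case: (classic (In b1)) => HIb1; last first.
  by apply: (cv b1 b2) => //; [rewrite in_cons Hb1m orbT | rewrite in_cons Hb2m orbT |
    rewrite Hb1 Hb2].
rewrite (pi_In HIa1) in Ha1; rewrite (pi_In HIb1) in Hb1.
have Ha2' := pi_In_inv HIa1 (etrans Ha2 (esym Ha1)).
have Hb2' := pi_In_inv HIb1 (etrans Hb2 (esym Hb1)).
rewrite Ha2' Hb2' in Hab2.
exact: (common _ Hab1 Hab2).
Qed.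

Lemma aux_into z a : aux z -> aux_edge E s r a z -> idom E s a z.
Proof.
move=> Hz; case: (aux_facts Hz) => Hzr Hrz HIz Hmz.
case=> [[_ [_ H]]|[[_ [Hzr' _]]|[[_ [H _]]|[[v [_ _ _ H]]|[[u [_ H _ _]]|[u [v [_ _ _ _ H]]]]]]]].
- exact: H.
- by case: Hzr.
- by case: HIz.
- by case: Hzr; apply: (dom_antisym Hsc (idom_dom H) Hrz).
- by case: HIz.
- by case: Hzr; apply: (dom_antisym Hsc (idom_dom H) Hrz).
Qed.

Lemma aux_from_out a b : ~ dom r a -> aux_edge E s r a b -> b = r.
Proof.
move=> Ha.
case=> [[H _]|[[_ [-> _]]|[[H _]|[[v [_ H _ _]]|[[u [_ _ H _]]|[u [v [_ H _ _ _]]]]]]]].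
- by case: Ha; exact: In_dom.
- by [].
- by case: Ha; exact: In_dom.
- by case: Ha; exact: In_dom.
- by case: Ha; case: (aux_facts H).
- by case: Ha; case: (aux_facts H).
Qed.

Lemma out_walk v : r <> s -> ~ dom r v -> exists seg,
  [/\ walk R v seg, last v seg = dr & all (fun t => ~~ pb (dom r t)) (v :: seg)].
Proof.
move=> Hrs Hv; have [p [Hp Hl]] := Hsc v r.
have Hnv : ~~ (fun t => pb (dom r t)) v by apply/negP => /pbP.
have Hhas : has (fun t => pb (dom r t)) p.
  case: p Hp Hl => [|y p] Hp Hl.
    by simpl in Hl; subst v; case: Hv; exact (@domr r).
  apply/hasP; exists (last y p); first exact: mem_last.
  by apply/pbP; simpl in Hl; rewrite Hl; exact (@domr r).
have [p1 [b [p2 [Hpe Hall Hb]]]] := first_enter (Q := fun t => pb (dom r t)) Hnv Hhas.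
move: Hp; rewrite Hpe walk_cat => [[Hp1 /= [Eb _]]].
have Hlast : ~ dom r (last v p1).
  move/allP: Hall => /(_ (last v p1) (mem_last _ _)) /= /negP H1 H2; apply: H1.
  exact/pbP.
case: (r_out Hrs) => _ Hbr _.
have Hb' : dom r b by move/pbP: Hb.
have [_ Hl1] := enter_bridge Hbr Hb' Hlast Eb.
by exists p1; split.
Qed.

Lemma reg_walk z u : dom z u -> exists seg,
  [/\ walk R z seg, last z seg = u & all (fun t => pb (dom z t)) (z :: seg)].
Proof.
move=> Hzu; have [p [Hp Hl]] := Hsc s u.
have [p1 [p2 [Hpe Hl1 Hzn]]] := split_last (Hzu p Hp Hl).
have [Hp1 Hp2] : walk R s p1 /\ walk R z p2 by move: Hp; rewrite Hpe walk_cat Hl1.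
have Hl2 : last z p2 = u by rewrite -Hl1 -last_cat -Hpe.
exists p2; split => //.
apply/allP => t Ht; apply/pbP; apply: NNPP => Hzt.
have [w [Hw Hlw Hzw]] := ndom Hzt.
have [q1 [q2 [Hqe Hlq _]]] := split_last Ht.
have Hq2 : walk R t q2 by move: Hp2; rewrite Hqe walk_cat Hlq => [[]].
have Hwq : walk R s (w ++ q2) by apply/walk_cat; rewrite Hlw.
have Hlwq : last s (w ++ q2) = u by rewrite last_cat Hlw -Hlq -last_cat -Hqe.
move: (Hzu _ Hwq Hlwq); rewrite -cat_cons mem_cat (negPf Hzw) /=.
by move=> Hz2; rewrite Hqe mem_cat Hz2 orbT in Hzn.
Qed.

Definition belongs (e e' : V * V) : Prop :=
  (pi e.1 = e'.1 /\ pi e.2 = e'.2) \/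
  [/\ pi e.1 = pi e.2, (pi e.1 = e'.1 \/ pi e.1 = e'.2) & ~ In (pi e.1)].

Lemma all_edges (P : pred V) x seg a b : all P (x :: seg) ->
  (a, b) \in walk_edges x seg -> P a /\ P b.
Proof.
move=> /allP H /walk_edges_mem [Ha Hb]; split; apply: H => //.
by rewrite in_cons Hb orbT.
Qed.

Lemma belongs_out a b c : r <> s -> ~ dom r a -> ~ dom r b -> belongs (a, b) (c, dr).
Proof.
move=> Hrs Ha Hb; right; rewrite /= (pi_out Ha) (pi_out Hb); split => //; first by right.
by move=> H; case: (r_out Hrs) => _ _ []; exact: In_dom.
Qed.

Lemma belongs_reg a b z d : aux z -> dom z a -> dom z b -> belongs (a, b) (z, d).
Proof.
move=> Hz Ha Hb; right; rewrite /= (pi_reg Hz Ha) (pi_reg Hz Hb); split => //; first by left.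
by case: (aux_facts Hz).
Qed.

Lemma pbN (P : Prop) : ~~ pb P -> ~ P.
Proof. by move=> H HP; move: H; case: pbP. Qed.

Lemma pbT (P : Prop) : pb P -> P.
Proof. by move/pbP. Qed.

Lemma seg_lemma c d : aux_edge E s r c d -> exists seg,
  [/\ walk R c seg, last c seg = d & forall e, e \in walk_edges c seg -> belongs e (c, d)].
Proof.
case=> [[Hc [Hmd Hcd]]|[[Hrs [Hdr Hcr]]|[[Hc [Hd Ecd]]|[[v [Ecv Hc Hv Hdr]]|
  [[u [Eud Hd Hca Hcu]]|[u [v [Euv Hca Hcu Hv Hdr]]]]]]]].
- have Hauxd : aux d by split => //; exists c.
  have Ecd : E c d.
    case: (Hmd) => _ [u [Hu Hb]]; have Huc := idom_uniq Hsc Hu Hcd; subst u.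
    exact: bridge_edge Hb.
  exists [:: d]; split => //= e; rewrite walk_edges_cons mem_seq1 => /eqP ->.
  by left; rewrite /= (pi_In Hc) (pi_reg Hauxd (@domr d)).
- subst d; case: (r_out Hrs) => Hid Hbr Hnd.
  have Hcdr := idom_uniq Hsc Hid Hcr; subst c.
  exists [:: r]; split => //=; first by split => //; exact: bridge_edge Hbr.
  move=> e; rewrite walk_edges_cons mem_seq1 => /eqP ->.
  by left; rewrite /= (pi_out Hnd) (pi_In In_r).
- exists [:: d]; split => //= e; rewrite walk_edges_cons mem_seq1 => /eqP ->.
  by left; rewrite /= (pi_In Hc) (pi_In Hd).
- have Hrs : r <> s by case: Hdr.
  case: (r_out Hrs) => Hid _ _; have Hdd := idom_uniq Hsc Hid Hdr; subst d.
  have [seg [Hw Hl Hall]] := out_walk Hrs Hv.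
  exists (v :: seg); split => //= e; rewrite walk_edges_cons in_cons => /orP [/eqP ->|He].
    by left; rewrite /= (pi_In Hc) (pi_out Hv).
  case: e He => a b He.
  have [Ha Hb] := all_edges Hall He.
  exact: (belongs_out _ Hrs (pbN Ha) (pbN Hb)).
- have [seg [Hw Hl Hall]] := reg_walk Hcu.
  exists (seg ++ [:: d]); split.
  + by apply/walk_cat; split => //=; rewrite Hl.
  + by rewrite last_cat.
  + move=> e; rewrite walk_edges_cat mem_cat Hl walk_edges_cons mem_seq1 => /orP [He|/eqP ->].
      case: e He => a b He; have [Ha Hb] := all_edges Hall He.
      exact: (belongs_reg _ Hca (pbT Ha) (pbT Hb)).
    by left; rewrite /= (pi_reg Hca Hcu) (pi_In Hd).
- have Hrs : r <> s by case: Hdr.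
  case: (r_out Hrs) => Hid _ _; have Hdd := idom_uniq Hsc Hid Hdr; subst d.
  have [seg1 [Hw1 Hl1 Hall1]] := reg_walk Hcu.
  have [seg2 [Hw2 Hl2 Hall2]] := out_walk Hrs Hv.
  exists (seg1 ++ v :: seg2); split.
  + by apply/walk_cat; split => //=; rewrite Hl1.
  + by rewrite last_cat /= Hl2.
  + move=> e; rewrite walk_edges_cat mem_cat Hl1 walk_edges_cons in_cons.
    case/orP => [He|/orP [/eqP ->|He]].
    * case: e He => a b He; have [Ha Hb] := all_edges Hall1 He.
      exact: (belongs_reg _ Hca (pbT Ha) (pbT Hb)).
    * by left; rewrite /= (pi_reg Hca Hcu) (pi_out Hv).
    * case: e He => a b He; have [Ha Hb] := all_edges Hall2 He.
      exact: (belongs_out _ Hrs (pbN Ha) (pbN Hb)).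
Qed.

Lemma expand c P : walk (aux_edge E s r) c P -> exists p,
  [/\ walk R c p, last c p = last c P &
      forall e, e \in walk_edges c p -> exists2 e', e' \in walk_edges c P & belongs e e'].
Proof.
elim: P c => [|d P IH] c /=.
  by move=> _; exists [::].
move=> [Hcd HP]; have [seg [Hw Hl Hb]] := seg_lemma Hcd.
have [p [Hp Hlp Hbp]] := IH d HP.
exists (seg ++ p); split.
- by apply/walk_cat; rewrite Hl.
- by rewrite last_cat Hl.
- move=> e; rewrite walk_edges_cat mem_cat Hl => /orP [He|He].
    by exists (c, d); [rewrite walk_edges_cons mem_head | exact: Hb].
  have [e' He' Hbe] := Hbp e He.
  by exists e' => //; rewrite walk_edges_cons in_cons He' orbT.
Qed.

Lemma mem_from (x : V) (P : seq V) (c d k : V) : (c, d) \in walk_edges x P -> (k = c \/ k = d) -> k \in x :: P.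
Proof.
move=> /walk_edges_mem [Hc Hd] [->|->] //.
by rewrite in_cons Hd orbT.
Qed.

Lemma bwd x y : In x -> In y -> two_edge_disjoint_paths (aux_edge E s r) x y ->
  two_edge_disjoint_paths R x y.
Proof.
move=> Hx Hy [P [Q [HP HlP HQ HlQ Hd]]].
have [p [Hp Hlp Hbp]] := expand HP.
have [q [Hq Hlq Hbq]] := expand HQ.
exists p, q; split => //; [by rewrite Hlp | by rewrite Hlq |].
have common : forall e, e \in walk_edges x P -> e \in walk_edges x Q -> False.
  by move=> e H1 H2; move/allP: Hd => /(_ e H1); rewrite H2.
have enter : forall z W, aux z -> walk (aux_edge E s r) x W -> z \in x :: W ->
    exists a, idom E s a z /\ (a, z) \in walk_edges x W.
  move=> z W Hz HW HzW.
  have Hxz : ~~ (fun t => t == z) x.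
    by apply/eqP => Hxz; subst x; case: (aux_facts Hz).
  have HzW' : has (fun t => t == z) W.
    apply/hasP; exists z => //; move: HzW; rewrite in_cons => /orP [/eqP Hzx|//].
    by move: Hxz; rewrite /= Hzx eqxx.
  have [a [b [Hab _ /eqP Hb]]] := enter_edge (Q := fun t => t == z) Hxz HzW'.
  subst b; exists a; split => //; apply: aux_into Hz (walk_edge_rel HW Hab).
have leave : forall W, r <> s -> walk (aux_edge E s r) x W -> last x W = y -> dr \in x :: W ->
    (dr, r) \in walk_edges x W.
  move=> W Hrs HW HlW HdW.
  case: (r_out Hrs) => _ _ Hnd.
  have H1 : has (fun t => t == dr) (x :: W) by apply/hasP; exists dr.
  have H2 : ~~ (fun t => t == dr) (last x W).
    by rewrite /= HlW; apply/eqP => Hyd; case: Hnd; rewrite -Hyd; exact: In_dom.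
  have [a [b [Hab /eqP Ha _]]] := exit_edge (Q := fun t => t == dr) H1 H2.
  subst a; have Hb := aux_from_out Hnd (walk_edge_rel HW Hab).
  by rewrite -Hb.
have cv : forall k a, k \in x :: P -> k \in x :: Q -> ~ In k -> pi a = k -> False.
  move=> k a HkP HkQ HIk Ha.
  case: (zone a) => [HIa|[z [Hz Hza]]|Hoa].
  - by rewrite (pi_In HIa) in Ha; subst k.
  - rewrite (pi_reg Hz Hza) in Ha; subst k.
    have [a1 [Ha1 E1]] := enter z P Hz HP HkP.
    have [a2 [Ha2 E2]] := enter z Q Hz HQ HkQ.
    have Ha12 := idom_uniq Hsc Ha1 Ha2; subst a2.
    exact: (common _ E1 E2).
  - have Hrs := out_ne Hoa; rewrite (pi_out Hoa) in Ha; subst k.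
    exact: (common _ (leave P Hrs HP HlP HkP) (leave Q Hrs HQ HlQ HkQ)).
apply/allP => [[a b]] H1; apply/negP => H2.
have [[c1 d1] He1 Hb1] := Hbp _ H1.
have [[c2 d2] He2 Hb2] := Hbq _ H2.
case: Hb1 => [/= [Ha1 Hb1']|/= [Heq Hk Hnk]].
- case: Hb2 => [/= [Ha2 Hb2']|/= [Heq Hk2 Hnk]].
  + by move: He2; rewrite -Ha2 -Hb2' Ha1 Hb1' => He2; exact: (common _ He1 He2).
  + apply: (cv (pi a) a) => //; first exact: (mem_from He1 (or_introl Ha1)).
    exact: (mem_from He2 Hk2).
- apply: (cv (pi a) a) => //; first exact: (mem_from He1 Hk).
  case: Hb2 => [/= [Ha2 _]|/= [_ Hk2 _]].
    exact: (mem_from He2 (or_introl Ha2)).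
  exact: (mem_from He2 Hk2).
Qed.

End Zones.


Theorem mainTheorem10 (V : finType) (E : rel V) (s v w : V) :
  strongly_connected E -> v <> w ->
  (two_edge_conn (edgeP E) v w <->
   exists r : V, [/\ subtree_root E s r, inT E s r v, inT E s r w &
                     two_edge_conn (aux_edge E s r) v w]).
Proof.
move=> Hsc Hvw; split.
- case => [//|[Hd1 Hd2]].
  have [r Hrv] := find_root s Hsc v.
  case: (Hrv) => Hr Hrv' Hcl.
  have Hrw : dom E s r w.
    case: (Hr) => [->|Hmr]; first exact: (@dom_s _ E s w).
    apply: NNPP => Hn; case: (Hmr) => _ [u [_ Hbr]].
    exact: (bridge_sep2 Hbr Hrv' Hn Hd2).
  have Hw : inT E s r w.
    split => // y Hy1 Hy2 Hy3 Hy4.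
    case: (classic (dom E s y v)) => Hyv; first exact: (Hcl y Hy1 Hy2 Hyv Hy4).
    case: (Hy4) => _ [u [_ Hbr]].
    exact: (bridge_sep2 Hbr Hy3 Hyv Hd1).
  exists r; split => //; right; split.
    exact: (fwd Hsc Hr Hrv Hw Hd1).
  exact: (fwd Hsc Hr Hw Hrv Hd2).
- move=> [r [Hr Hv Hw [//|[H1 H2]]]].
  right; split.
    exact: (bwd Hsc Hr Hv Hw H1).
  exact: (bwd Hsc Hr Hw Hv H2).
Qed.
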